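(* Let $V$ be a Majorana algebra with a generating set $A$ of Majorana axes. Suppose $a_0, a_1 \in A$ satisfy $\tau(a_0) = 1$ and the subalgebra $U = \langle\langle a_0, a_1\rangle\rangle$ generated by $a_0$ and $a_1$ is of type $2A$, with third basis vector $a_\rho$. Then $a_\rho$ satisfies axioms M3–M7.
   Context: Let $V$ be a real vector space with a positive definite symmetric bilinear form $(\,,\,)$ and a bilinear commutative (non-associative) product $\cdot$ such that (M1) $(u, v\cdot w) = (u\cdot v, w)$ for all $u,v,w\in V$, and (M2) $(u\cdot u, v\cdot v)\ge (u\cdot v, u\cdot v)$ for all $u,v \in V$. For $a \in V$ and $\mu \in \mathbb{R}$ write $V_\mu^{(a)} = \{v \in V : a\cdot v = \mu v\}$. A nonzero $a\in V$ is said to satisfy axioms M3–M7 if: (M3) $(a,a)=1$ and $a\cdot a = a$; (M4) $V = V_1^{(a)}\oplus V_0^{(a)}\oplus V_{1/4}^{(a)} \oplus V_{1/32}^{(a)}$; (M5) $V_1^{(a)} = \mathbb{R}a$; (M6) the linear map $\tau(a)$ of $V$ acting as $+1$ on $V_1^{(a)}\oplus V_0^{(a)}\oplus V_{1/4}^{(a)}$ and as $-1$ on $V_{1/32}^{(a)}$ preserves the algebra product; (M7) on $V_+^{(a)} := V_1^{(a)}\oplus V_0^{(a)}\oplus V_{1/4}^{(a)}$, the linear map $\sigma(a)$ acting as $+1$ on $V_1^{(a)}\oplus V_0^{(a)}$ and as $-1$ on $V_{1/4}^{(a)}$ preserves the restriction of the algebra product to $V_+^{(a)}$. Elements satisfying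 M3–M7 are called Majorana axes. A Majorana algebra is such a $V$ (satisfying M1, M2) generated as an algebra by a set $A$ of Majorana axes. The subalgebra $\langle\langle a_0,a_1\rangle\rangle$ generated by two Majorana axes is of type $2A$ if it is $3$-dimensional with basis $a_0, a_1, a_\rho$ (the ''third basis vector'') where $a_\rho\cdot a_\rho = a_\rho$, $a_0\cdot a_1 = \frac{1}{8}(a_0+a_1-a_\rho)$, $a_0\cdot a_\rho = \frac18(a_0+a_\rho-a_1)$, $a_1\cdot a_\rho = \frac18(a_1+a_\rho-a_0)$, and $(a_0,a_1)=(a_0,a_\rho)=(a_1,a_\rho)=\frac18$. *)

(* Defs.v *)
From HB Require Import structures.
From mathcomp Require Import all_boot all_order all_algebra.
From mathcomp Require Import reals.
Set Implicit Arguments. Unset Strict Implicit. Unset Printing Implicit Defensive.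
Import Order.TTheory GRing.Theory Num.Theory.
Local Open Scope ring_scope.

Section Majorana.
Variables (R : realType) (V : lmodType R)
          (form : V -> V -> R) (mul : V -> V -> V).

Definition form_axioms : Prop :=
  [/\ (forall (c : R) (u v w : V), form (c *: u + v) w = c * form u w + form v w),
      (forall u v, form u v = form v u)
    & (forall v, v != 0 -> 0 < form v v)].

Definition product_axioms : Prop :=
  (forall (c : R) (u v w : V), mul (c *: u + v) w = c *: mul u w + mul v w) /\
  (forall u v, mul u v = mul v u).

Definition M1 : Prop := forall u v w, form u (mul v w) = form (mul u v) w.
Definition M2 : Prop := forall u v, form (mul u v) (mul u v) <= form (mul u u) (mul v v).

Definition eigsp (a : V) (mu : R) (v : V) : Prop := mul a v = mu *: v.

Definition lin_map (t : V -> V) : Prop :=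
  forall (c : R) (u v : V), t (c *: u + v) = c *: t u + t v.

Definition M3 (a : V) : Prop := form a a = 1 /\ mul a a = a.

Definition M4 (a : V) : Prop :=
  (forall v, exists v1 v0 v4 v32,
      [/\ eigsp a 1 v1, eigsp a 0 v0, eigsp a (1/4) v4, eigsp a (1/32) v32
        & v = v1 + v0 + v4 + v32]) /\
  (forall v1 v0 v4 v32,
      eigsp a 1 v1 -> eigsp a 0 v0 -> eigsp a (1/4) v4 -> eigsp a (1/32) v32 ->
      v1 + v0 + v4 + v32 = 0 -> [/\ v1 = 0, v0 = 0, v4 = 0 & v32 = 0]).

Definition M5 (a : V) : Prop := forall v, eigsp a 1 v <-> exists c : R, v = c *: a.

Definition is_tau (a : V) (t : V -> V) : Prop :=
  [/\ lin_map t,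
      (forall v, eigsp a 1 v \/ eigsp a 0 v \/ eigsp a (1/4) v -> t v = v)
    & (forall v, eigsp a (1/32) v -> t v = - v)].

Definition M6 (a : V) : Prop :=
  forall t, is_tau a t -> forall u v, t (mul u v) = mul (t u) (t v).

Definition Vplus (a : V) (v : V) : Prop :=
  exists v1 v0 v4, [/\ eigsp a 1 v1, eigsp a 0 v0, eigsp a (1/4) v4 & v = v1 + v0 + v4].

(* s is (a linear map extending) sigma(a) on V_+^(a) *)
Definition is_sigma (a : V) (s : V -> V) : Prop :=
  [/\ lin_map s,
      (forall v, eigsp a 1 v \/ eigsp a 0 v -> s v = v)
    & (forall v, eigsp a (1/4) v -> s v = - v)].

Definition M7 (a : V) : Prop :=
  forall s, is_sigma a s ->
    forall u v, Vplus a u -> Vplus a v -> s (mul u v) = mul (s u) (s v).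

Definition majorana_axis (a : V) : Prop := [/\ M3 a, M4 a, M5 a, M6 a & M7 a].

Definition subalg (S : V -> Prop) : Prop :=
  [/\ S 0,
      (forall (c : R) u v, S u -> S v -> S (c *: u + v))
    & (forall u v, S u -> S v -> S (mul u v))].

Definition gen (A : V -> Prop) (v : V) : Prop :=
  forall S, subalg S -> (forall x, A x -> S x) -> S v.

Definition majorana_algebra (A : V -> Prop) : Prop :=
  [/\ form_axioms, product_axioms, M1 /\ M2,
      (forall a, A a -> majorana_axis a)
    & (forall v, gen A v)].

Definition type2A (a0 a1 arho : V) : Prop :=
  [/\ (forall v, gen (fun x => x = a0 \/ x = a1) v <->
                 exists c0 c1 c2 : R, v = c0 *: a0 + c1 *: a1 + c2 *: arho),
      (forall c0 c1 c2 : R, c0 *: a0 + c1 *: a1 + c2 *: arho = 0 ->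
                 [/\ c0 = 0, c1 = 0 & c2 = 0]),
      [/\ mul arho arho = arho,
          mul a0 a1 = (1/8) *: (a0 + a1 - arho),
          mul a0 arho = (1/8) *: (a0 + arho - a1)
        & mul a1 arho = (1/8) *: (a1 + arho - a0)]
    & [/\ form a0 a1 = 1/8, form a0 arho = 1/8 & form a1 arho = 1/8]].

End Majorana.

(* Main.v *)
Require Import Defs.
From HB Require Import structures.
From mathcomp Require Import all_boot all_order all_algebra.
From mathcomp Require Import reals ring lra.
From Stdlib Require Import ClassicalEpsilon.
Set Implicit Arguments. Unset Strict Implicit. Unset Printing Implicit Defensive.
Import Order.TTheory GRing.Theory Num.Theory.
Local Open Scope ring_scope.

Section Basic.
Variables (R : realType) (V : lmodType R).

Lemma lin0 (t : V -> V) : lin_map t -> t 0 = 0.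
Proof.
move=> H; have := H 1 0 0; rewrite scaler0 addr0 scale1r => E.
by apply/(addrI (t 0)); rewrite addr0 -E.
Qed.

Lemma linZ (t : V -> V) c u : lin_map t -> t (c *: u) = c *: t u.
Proof. by move=> H; have := H c u 0; rewrite addr0 lin0 // addr0. Qed.

Lemma linD (t : V -> V) u v : lin_map t -> t (u + v) = t u + t v.
Proof. by move=> H; have := H 1 u v; rewrite !scale1r. Qed.

Lemma linN (t : V -> V) u : lin_map t -> t (- u) = - t u.
Proof. by move=> H; have := H (-1) u 0; rewrite addr0 lin0 // addr0 !scaleN1r. Qed.

Lemma linB (t : V -> V) u v : lin_map t -> t (u - v) = t u - t v.
Proof. by move=> H; rewrite linD // linN. Qed.

Variables (form : V -> V -> R) (mul : V -> V -> V).
Hypothesis Hf : form_axioms form.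
Hypothesis Hp : product_axioms mul.
Hypothesis HM1 : M1 form mul.

Lemma mul_lin_l w : lin_map (fun u => mul u w).
Proof. by move=> c u v; exact: Hp.1. Qed.

Lemma mul_lin_r a : lin_map (mul a).
Proof. by move=> c u v; rewrite !(Hp.2 a); exact: Hp.1. Qed.

Lemma form0l w : form 0 w = 0.
Proof.
case: Hf => H1 _ _; have := H1 1 0 0 w; rewrite scaler0 addr0 mul1r => E.
by apply/(addrI (form 0 w)); rewrite addr0 -E.
Qed.

Lemma formZl c u w : form (c *: u) w = c * form u w.
Proof. by case: Hf => H1 _ _; have := H1 c u 0 w; rewrite addr0 form0l addr0. Qed.

Lemma formDl u v w : form (u + v) w = form u w + form v w.
Proof. by case: Hf => H1 _ _; have := H1 1 u v w; rewrite scale1r mul1r. Qed.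

Lemma formNl u w : form (- u) w = - form u w.
Proof. by rewrite -scaleN1r formZl mulN1r. Qed.

Lemma formC u w : form u w = form w u.
Proof. by case: Hf. Qed.

Lemma formZr c u w : form w (c *: u) = c * form w u.
Proof. by rewrite formC formZl formC. Qed.
Lemma formDr u v w : form w (u + v) = form w u + form w v.
Proof. by rewrite formC formDl !(formC w). Qed.
Lemma formNr u w : form w (- u) = - form w u.
Proof. by rewrite formC formNl formC. Qed.

Lemma eig_lin a mu c u v : eigsp mul a mu u -> eigsp mul a mu v -> eigsp mul a mu (c *: u + v).
Proof.
rewrite /eigsp => Hu Hv; rewrite (mul_lin_r a) Hu Hv scalerDr !scalerA mulrC //.
Qed.

Lemma eig0 a mu : eigsp mul a mu 0.
Proof. by rewrite /eigsp lin0 ?scaler0 //; exact: mul_lin_r. Qed.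

Lemma eigD a mu u v : eigsp mul a mu u -> eigsp mul a mu v -> eigsp mul a mu (u + v).
Proof. by move=> Hu Hv; rewrite -[u]scale1r; exact: eig_lin. Qed.

Lemma eigN a mu u : eigsp mul a mu u -> eigsp mul a mu (- u).
Proof. by move=> Hu; rewrite -scaleN1r -[_ *: u]addr0; apply: eig_lin => //; exact: eig0. Qed.

Lemma eigB a mu u v : eigsp mul a mu u -> eigsp mul a mu v -> eigsp mul a mu (u - v).
Proof. by move=> Hu Hv; apply: eigD => //; exact: eigN. Qed.

Lemma eig_orth a l m x y : eigsp mul a l x -> eigsp mul a m y -> l != m -> form x y = 0.
Proof.
rewrite /eigsp => Hx Hy lm.
have E : l * form x y = m * form x y.
  by rewrite -formZl -Hx Hp.2 -HM1 Hy formZr.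
apply/eqP; move: E => /eqP; rewrite -subr_eq0 -mulrBl mulf_eq0 subr_eq0.
by rewrite (negbTE lm).
Qed.

End Basic.

Section Transfer.
Variables (R : realType) (V : lmodType R).
Variables (form : V -> V -> R) (mul : V -> V -> V) (phi : V -> V).
Hypothesis Hlin : lin_map phi.
Hypothesis Hinv : forall v, phi (phi v) = v.
Hypothesis Hhom : forall u v, phi (mul u v) = mul (phi u) (phi v).
Hypothesis Hiso : forall u v, form (phi u) (phi v) = form u v.

Lemma eig_phi a mu v : eigsp mul (phi a) mu v <-> eigsp mul a mu (phi v).
Proof.
rewrite /eigsp; split => H.
  by rewrite -{1}(Hinv a) -Hhom H linZ.
by rewrite -{1}(Hinv v) -Hhom H linZ // Hinv.
Qed.

Lemma eig_phi' a mu v : eigsp mul a mu v -> eigsp mul (phi a) mu (phi v).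
Proof. by move=> H; apply/eig_phi; rewrite Hinv. Qed.

Lemma transfer a : majorana_axis form mul a -> majorana_axis form mul (phi a).
Proof.
case=> [[F1 Maa] [M4e M4u] M5a M6a M7a]; split.
- by split; rewrite ?Hiso // -Hhom Maa.
- split.
    move=> v; have [w1 [w0 [w4 [w32 [E1 E0 E4 E32 Ev]]]]] := M4e (phi v).
    exists (phi w1), (phi w0), (phi w4), (phi w32); split; try exact: eig_phi'.
    by rewrite -!linD // -Ev Hinv.
  move=> v1 v0 v4 v32 E1 E0 E4 E32 Es.
  have: phi v1 + phi v0 + phi v4 + phi v32 = 0 by rewrite -!linD // Es lin0.
  move/(M4u _ _ _ _ (proj1 (eig_phi _ _ _) E1) (proj1 (eig_phi _ _ _) E0)
                    (proj1 (eig_phi _ _ _) E4) (proj1 (eig_phi _ _ _) E32)).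
  case=> Z1 Z0 Z4 Z32.
  by split; rewrite -[LHS]Hinv ?Z1 ?Z0 ?Z4 ?Z32 lin0.
- move=> v; rewrite eig_phi M5a; split; case=> c Hc; exists c.
    by rewrite -[v]Hinv Hc linZ.
  by rewrite Hc linZ // Hinv.
- move=> t [Tl T1 T32] u v.
  have Ht : is_tau mul a (fun v => phi (t (phi v))).
    split.
    + by move=> c x y; rewrite linD // linZ // linD // linZ // linD // linZ.
    + move=> x Hx; rewrite T1 ?Hinv //.
      by case: Hx => [H|[H|H]]; [left|right;left|right;right]; apply: eig_phi'.
    + by move=> x Hx; rewrite T32 ?linN ?Hinv //; apply: eig_phi'.
  have := M6a _ Ht (phi u) (phi v); rewrite !Hinv Hhom !Hinv => E.
  by rewrite -[LHS]Hinv E -Hhom Hinv.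
- move=> s [Sl S1 S4] u v Hu Hv.
  have Hs : is_sigma mul a (fun v => phi (s (phi v))).
    split.
    + by move=> c x y; rewrite linD // linZ // linD // linZ // linD // linZ.
    + move=> x Hx; rewrite S1 ?Hinv //.
      by case: Hx => [H|H]; [left|right]; apply: eig_phi'.
    + by move=> x Hx; rewrite S4 ?linN ?Hinv //; apply: eig_phi'.
  have VP : forall w, Vplus mul (phi a) w -> Vplus mul a (phi w).
    move=> w [w1 [w0 [w4 [E1 E0 E4 ->]]]].
    exists (phi w1), (phi w0), (phi w4); split; try exact/eig_phi.
    by rewrite !linD.
  have := M7a _ Hs (phi u) (phi v) (VP _ Hu) (VP _ Hv); rewrite !Hinv Hhom !Hinv => E.
  by rewrite -[LHS]Hinv E -Hhom Hinv.
Qed.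

End Transfer.

Section Sigma.
Variables (R : realType) (V : lmodType R).
Variables (form : V -> V -> R) (mul : V -> V -> V) (a0 : V).
Hypothesis Hf : form_axioms form.
Hypothesis Hp : product_axioms mul.
Hypothesis HM1 : M1 form mul.
Hypothesis H4 : M4 mul a0.
Hypothesis H32 : forall v, eigsp mul a0 (1/32) v -> v = 0.
Hypothesis H7 : M7 mul a0.

Lemma dec3 v : exists x4, exists x1 x0,
  [/\ eigsp mul a0 1 x1, eigsp mul a0 0 x0, eigsp mul a0 (1/4) x4 & v = x1 + x0 + x4].
Proof.
have [w1 [w0 [w4 [w32 [E1 E0 E4 E32 Ev]]]]] := H4.1 v.
by exists w4, w1, w0; split => //; rewrite Ev (H32 E32) addr0.
Qed.

Lemma VplusT v : Vplus mul a0 v.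
Proof. by have [x4 [x1 [x0 [? ? ? ?]]]] := dec3 v; exists x1, x0, x4. Qed.

Definition p4 v := proj1_sig (constructive_indefinite_description _ (dec3 v)).

Lemma p4_spec v : exists x1 x0,
  [/\ eigsp mul a0 1 x1, eigsp mul a0 0 x0, eigsp mul a0 (1/4) (p4 v) & v = x1 + x0 + p4 v].
Proof. exact: (proj2_sig (constructive_indefinite_description _ (dec3 v))). Qed.

Lemma alg3 (x1 x0 x4 y1 y0 y4 : V) :
  x1 - y1 + (x0 - y0) + (x4 - y4) + 0 = x1 + x0 + x4 - (y1 + y0 + y4).
Proof. by rewrite addr0 !opprD (addrACA x1) (addrACA (x1 + x0)). Qed.

Lemma p4_char v x1 x0 x4 : eigsp mul a0 1 x1 -> eigsp mul a0 0 x0 -> eigsp mul a0 (1/4) x4 ->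
  v = x1 + x0 + x4 -> p4 v = x4.
Proof.
move=> E1 E0 E4 Ev; have [y1 [y0 [F1 F0 F4 Fv]]] := p4_spec v.
have := H4.2 _ _ _ _ (eigB Hp E1 F1) (eigB Hp E0 F0) (eigB Hp E4 F4) (eig0 Hp a0 (1/32)).
rewrite alg3 -Ev -Fv subrr => /(_ erefl) [_ _ /eqP].
by rewrite subr_eq0 => /eqP.
Qed.

Lemma alg (A B P Q : V) : A + B - (P + Q) - (P + Q) = A - P - P + (B - Q - Q).
Proof. rewrite !opprD !addrA. by rewrite (addrAC A B) (addrAC (A - P + B) (-Q)) (addrAC (A - P) B). Qed.

Definition sg v := v - p4 v - p4 v.

Lemma sg_dec v x1 x0 x4 : eigsp mul a0 1 x1 -> eigsp mul a0 0 x0 -> eigsp mul a0 (1/4) x4 ->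
  v = x1 + x0 + x4 -> sg v = x1 + x0 - x4.
Proof. by move=> E1 E0 E4 Ev; rewrite /sg (p4_char E1 E0 E4 Ev) Ev addrK. Qed.

Lemma p4_lin : lin_map p4.
Proof.
move=> c u v; have [x1 [x0 [E1 E0 E4 Eu]]] := p4_spec u.
have [y1 [y0 [F1 F0 F4 Fv]]] := p4_spec v.
apply: (p4_char (eig_lin Hp c E1 F1) (eig_lin Hp c E0 F0) (eig_lin Hp c E4 F4)).
by rewrite {1}Eu {1}Fv !scalerDr (addrACA (c *: x1 + c *: x0)) (addrACA (c *: x1)).
Qed.

Lemma sg_lin : lin_map sg.
Proof.
move=> c u v; rewrite /sg p4_lin !scalerBr; exact: alg.
Qed.

Lemma sg_inv v : sg (sg v) = v.
Proof.
have [x1 [x0 [E1 E0 E4 Ev]]] := p4_spec v.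
rewrite (sg_dec E1 E0 E4 Ev).
by rewrite (sg_dec E1 E0 (eigN Hp E4) erefl) opprK -Ev.
Qed.

Lemma sg_sigma : is_sigma mul a0 sg.
Proof.
split; first exact: sg_lin.
- move=> v [H|H].
    rewrite (@sg_dec v v 0 0) ?subr0 ?addr0 //; exact: eig0.
  rewrite (@sg_dec v 0 v 0) ?subr0 ?add0r ?addr0 //; exact: eig0.
- move=> v H; rewrite (@sg_dec v 0 0 v) ?add0r ?sub0r //; exact: eig0.
Qed.

Lemma sg_hom u v : sg (mul u v) = mul (sg u) (sg v).
Proof. exact: (H7 sg_sigma (VplusT u) (VplusT v)). Qed.

Lemma one_quarter : (1 : R) != 1/4. Proof. by apply/eqP; lra. Qed.
Lemma zero_quarter : (0 : R) != 1/4. Proof. by apply/eqP; lra. Qed.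

Lemma sg_iso u v : form (sg u) (sg v) = form u v.
Proof.
have [x1 [x0 [E1 E0 E4 Eu]]] := p4_spec u.
have [y1 [y0 [F1 F0 F4 Fv]]] := p4_spec v.
rewrite (sg_dec E1 E0 E4 Eu) (sg_dec F1 F0 F4 Fv) [in RHS]Eu [in RHS]Fv.
have o1 := eig_orth Hf Hp HM1 E1 F4 one_quarter.
have o2 := eig_orth Hf Hp HM1 E0 F4 zero_quarter.
have o3 := eig_orth Hf Hp HM1 F1 E4 one_quarter.
have o4 := eig_orth Hf Hp HM1 F0 E4 zero_quarter.
rewrite (formC Hf y1) (formC Hf y0) in o3 o4.
rewrite !(formDl Hf, formDr Hf, formNl Hf, formNr Hf) o1 o2 o3 o4.
ring.
Qed.

End Sigma.

Section TwoA.
Variables (R : realType) (V : lmodType R).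
Variables (mul : V -> V -> V) (a0 a1 arho : V).
Hypothesis Hp : product_axioms mul.
Hypothesis Maa : mul a0 a0 = a0.
Hypothesis M01 : mul a0 a1 = (1/8) *: (a0 + a1 - arho).
Hypothesis M0r : mul a0 arho = (1/8) *: (a0 + arho - a1).

Definition comb (c0 c1 c2 : R) := c0 *: a0 + c1 *: a1 + c2 *: arho.

Lemma combD c0 c1 c2 d0 d1 d2 :
  comb c0 c1 c2 + comb d0 d1 d2 = comb (c0 + d0) (c1 + d1) (c2 + d2).
Proof. by rewrite /comb !scalerDl addrACA (addrACA (c0 *: a0)). Qed.

Lemma combZ k c0 c1 c2 : k *: comb c0 c1 c2 = comb (k * c0) (k * c1) (k * c2).
Proof. by rewrite /comb !scalerDr !scalerA. Qed.

Lemma combN c0 c1 c2 : - comb c0 c1 c2 = comb (- c0) (- c1) (- c2).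
Proof. by rewrite -scaleN1r combZ !mulN1r. Qed.

Lemma combB c0 c1 c2 d0 d1 d2 :
  comb c0 c1 c2 - comb d0 d1 d2 = comb (c0 - d0) (c1 - d1) (c2 - d2).
Proof. by rewrite combN combD. Qed.

Lemma e0 : a0 = comb 1 0 0. Proof. by rewrite /comb scale1r !scale0r !addr0. Qed.
Lemma e1 : a1 = comb 0 1 0. Proof. by rewrite /comb scale1r !scale0r add0r addr0. Qed.
Lemma e2 : arho = comb 0 0 1. Proof. by rewrite /comb scale1r !scale0r !add0r. Qed.

Lemma mul_a0_comb c0 c1 c2 :
  mul a0 (comb c0 c1 c2) = comb (c0 + c1/8 + c2/8) (c1/8 - c2/8) (c2/8 - c1/8).
Proof.
rewrite [in LHS]/comb !(linD _ _ (mul_lin_r Hp a0)) !(linZ _ _ (mul_lin_r Hp a0)).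
rewrite Maa M01 M0r.
rewrite [in LHS]e0 [in LHS]e1 [in LHS]e2.
rewrite !(combD, combB, combZ).
by congr comb; field.
Qed.

Lemma eig_comb mu c0 c1 c2 :
  mul a0 (comb c0 c1 c2) = comb (mu * c0) (mu * c1) (mu * c2) ->
  eigsp mul a0 mu (comb c0 c1 c2).
Proof. by rewrite /eigsp combZ. Qed.

End TwoA.

Theorem mainTheorem2 (R : realType) (V : lmodType R)
    (form : V -> V -> R) (mul : V -> V -> V) (A : V -> Prop)
    (a0 a1 arho : V) :
  majorana_algebra form mul A ->
  A a0 -> A a1 ->
  is_tau mul a0 idfun ->
  type2A form mul a0 a1 arho ->
  majorana_axis form mul arho.
Proof.
case=> Hf Hp [HM1 _] HA _ Aa0 Aa1 [_ _ T32] [_ _ [_ M01 M0r _] _].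
have [[_ Maa] H4 _ _ H7] := HA a0 Aa0.
have H32 : forall v, eigsp mul a0 (1/32) v -> v = 0.
  move=> v /T32 /= /eqP; rewrite -subr_eq0 opprK.
  rewrite -{1 2}[v]scale1r -scalerDl scaler_eq0 => /orP [|/eqP //].
  by move/eqP => H; exfalso; move: H; clear; lra.
have -> : arho = sg H4 H32 a1.
  have X1 : eigsp mul a0 1 (comb a0 a1 arho (1/8) 0 0).
    by apply: eig_comb; rewrite mul_a0_comb //; congr comb; field.
  have X0 : eigsp mul a0 0 (comb a0 a1 arho (-1/8) (1/2) (1/2)).
    by apply: eig_comb; rewrite mul_a0_comb //; congr comb; field.
  have X4 : eigsp mul a0 (1/4) (comb a0 a1 arho 0 (1/2) (-1/2)).
    by apply: eig_comb; rewrite mul_a0_comb //; congr comb; field.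
  rewrite (sg_dec Hp H4 H32 X1 X0 X4); last first.
    by rewrite {1}(e1 a0 a1 arho) !combD; congr comb; field.
  by rewrite combD combB {1}(e2 a0 a1 arho); congr comb; field.
apply: transfer.
- exact: sg_lin.
- exact: sg_inv.
- exact: sg_hom.
- exact: sg_iso.
- exact: HA.
Qed.
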